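(* Let $\alpha>0$ and let $\beta:[0,\infty)\to(0,\infty)$ be continuous. Let $S_0>0$, $I_0\ge 0$, and let $(S(t),I(t),R(t))$ be the solution of $$\dot S=-\frac{\beta(t)SI}{S+I},\qquad \dot I=\frac{\beta(t)SI}{S+I}-\alpha I,\qquad \dot R=\alpha I$$ with $S(0)=S_0$, $I(0)=I_0$. Then, for $t\ge 0$, $$\frac{I(t)}{S(t)}=y(t):=\frac{I_0}{S_0}\exp\left(\int_0^t(\beta(s)-\alpha)\,ds\right),$$ $$S(t)=S_0\exp\left(-\int_0^t\frac{\beta(s)y(s)}{1+y(s)}\,ds\right),\qquad I(t)=S(t)\,y(t).$$
   Context: Modified SIR epidemiological model with constant recovery rate $\alpha$ and time-dependent transmission rate $\beta(t)$; $S,I,R$ are fractions of susceptible, infective and removed individuals. *)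

(* Defs.v *)
From Stdlib Require Import Reals.
From Coquelicot Require Import Coquelicot.
Open Scope R_scope.

Definition continuous_on_nonneg (f : R -> R) : Prop :=
  (forall t, 0 < t -> continuous f t) /\
  filterlim f (at_right 0) (locally (f 0)).

Definition solves_on_nonneg (f f' : R -> R) : Prop :=
  (forall t, 0 < t -> is_derive f t (f' t)) /\ continuous_on_nonneg f.

(* Main.v *)
Require Import Defs.
From Stdlib Require Import Reals Lra.
From Coquelicot Require Import Coquelicot.
Open Scope R_scope.

Definition ext (f : R -> R) := fun s => f (Rmax s 0).

Lemma ext_pos f s : 0 <= s -> ext f s = f s.
Proof. intros; unfold ext; now rewrite Rmax_left. Qed.

Lemma L1 f : continuous_on_nonneg f -> forall x, continuous (ext f) x.
Proof.
  intros [Hp H0] x.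
  destruct (Rtotal_order x 0) as [Hx|[Hx|Hx]].
  - apply continuous_ext_loc with (g := fun _ => f 0).
    + assert (Hd : 0 < -x) by lra.
      exists (mkposreal _ Hd). intros y Hy. unfold ext.
      rewrite Rmax_right; auto.
      cbn in Hy. unfold AbsRing_ball, abs, minus, plus, opp in Hy; cbn in Hy.
      apply Rabs_def2 in Hy. lra.
    + apply continuous_const.
  - subst x. intros P HP.
    unfold ext at 1 in HP. rewrite Rmax_right in HP by lra.
    destruct (H0 P HP) as [d Hd].
    exists d. intros y Hy. unfold ext.
    destruct (Rle_lt_dec y 0).
    + rewrite Rmax_right by lra. apply locally_singleton. exact HP.
    + rewrite Rmax_left by lra. apply Hd; auto.
  - apply continuous_ext_loc with (g := f).
    + exists (mkposreal _ Hx). intros y Hy. unfold ext.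
      cbn in Hy. unfold AbsRing_ball, abs, minus, plus, opp in Hy; cbn in Hy.
      apply Rabs_def2 in Hy. rewrite Rmax_left; auto; lra.
    + apply Hp; auto.
Qed.

Lemma L2 h k : (forall x, continuous h x) -> (forall s, 0 <= s -> h s = k s) ->
  continuous_on_nonneg k.
Proof.
  intros Hh Hk. split.
  - intros t Ht. apply continuous_ext_loc with (g := h); auto.
    exists (mkposreal _ Ht). intros y Hy.
    cbn in Hy. unfold AbsRing_ball, abs, minus, plus, opp in Hy; cbn in Hy.
    apply Rabs_def2 in Hy. apply Hk; lra.
  - rewrite <- (Hk 0) by lra.
    apply filterlim_within_ext with (f := h).
    + intros; apply Hk; lra.
    + eapply filterlim_filter_le_1. apply filter_le_within. apply Hh.
Qed.

Lemma const_lemma g : (forall t, 0 < t -> is_derive g t 0) ->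
  filterlim g (at_right 0) (locally (g 0)) -> forall t, 0 <= t -> g t = g 0.
Proof.
  intros Hd H0 t Ht.
  assert (Hst : forall s, 0 < s <= t -> g t = g s).
  { intros s Hs. destruct (MVT_gen g s t (fun _ => 0)) as [c [_ Hc]].
    - intros x Hx. apply Hd. unfold Rmin in Hx; destruct Rle_dec; lra.
    - intros x Hx. apply continuity_pt_filterlim.
      assert (Hx0 : 0 < x) by (unfold Rmin in Hx; destruct Rle_dec; lra).
      exact (@ex_derive_continuous R_AbsRing R_NormedModule g x (ex_intro _ 0 (Hd x Hx0))).
    - lra. }
  destruct (Req_dec (g t) (g 0)) as [E|E]; auto. exfalso.
  assert (He : 0 < Rabs (g t - g 0)) by (apply Rabs_pos_lt; lra).
  destruct (proj1 (filterlim_locally g (g 0)) H0 (mkposreal _ He)) as [d Hdd].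
  destruct (Rle_lt_dec t 0). { apply E; f_equal; lra. }
  set (s := Rmin (d/2) t).
  assert (Hs : 0 < s <= t).
  { unfold s, Rmin; destruct Rle_dec; destruct d; cbn in *; lra. }
  assert (B := Hdd s). rewrite <- (Hst s Hs) in B.
  cbn in B. unfold AbsRing_ball, abs, minus, plus, opp in B; cbn in B.
  assert (Hb : ball 0 d s).
  { cbn. unfold AbsRing_ball, abs, minus, plus, opp; cbn.
    rewrite Rabs_right; unfold s, Rmin in *; destruct Rle_dec; destruct d; cbn in *; lra. }
  specialize (B Hb ltac:(lra)). 
  rewrite <- Rabs_Ropp in B. replace (- (g t + - g 0)) with (-(g t - g 0)) in B by ring.
  rewrite Rabs_Ropp in B. cbn in B. lra.
Qed.

Lemma core (c f : R -> R) (Hc : forall x, continuous c x)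
  (Hf : forall t, 0 < t -> is_derive f t (c t * f t))
  (Hf0 : filterlim f (at_right 0) (locally (f 0))) :
  forall t, 0 <= t -> f t = f 0 * exp (RInt c 0 t).
Proof.
  set (C := fun t => RInt c 0 t).
  assert (HC : forall x, is_derive C x (c x)).
  { intros x. apply (is_derive_RInt c C 0 x); auto.
    apply filter_forall. intros b. apply (RInt_correct c 0 b).
    apply ex_RInt_continuous. intros; auto. }
  set (g := fun t => f t * exp (- C t)).
  assert (Hg : forall t, 0 <= t -> g t = g 0).
  { apply const_lemma.
    - intros t Ht. unfold g.
      assert (D := is_derive_mult f (fun t => exp (- C t)) t _ _ (Hf t Ht)
        (is_derive_comp exp (fun t => - C t) t _ _ (is_derive_exp _)
          (is_derive_opp C t _ (HC t))) ltac:(intros; apply Rmult_comm)).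
      cbn in D. unfold mult, plus, scal, opp in D; cbn in D.
      unfold mult in D; cbn in D.
      replace 0 with (c t * f t * exp (- C t) + f t * (- c t * exp (- C t))) by ring.
      exact D.
    - unfold g. apply (filterlim_comp_2 (G := locally (f 0)) (H := locally (exp (- C 0))) f (fun t => exp (- C t)) Rmult); auto.
      + eapply filterlim_filter_le_1. apply filter_le_within.
        apply (continuous_comp (fun t => - C t) exp).
        * apply (@continuous_opp R_UniformSpace R_AbsRing R_NormedModule).
          exact (@ex_derive_continuous R_AbsRing R_NormedModule C 0 (ex_intro _ _ (HC 0))).
        * apply continuous_exp.
      + apply (filterlim_mult (K := R_AbsRing)). }
  intros t Ht. specialize (Hg t Ht). unfold g, C in Hg.
  assert (Z : RInt c 0 0 = 0) by (rewrite RInt_point; reflexivity).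
  rewrite Z, Ropp_0, exp_0, Rmult_1_r in Hg.
  unfold C. rewrite <- Hg, Rmult_assoc, <- exp_plus.
  replace (- RInt c 0 t + RInt c 0 t) with 0 by ring. rewrite exp_0; ring.
Qed.

Lemma cR_mult (f g : R -> R) x : continuous f x -> continuous g x -> continuous (fun y => f y * g y) x.
Proof. intros; exact (@continuous_mult R_UniformSpace R_AbsRing f g x H H0). Qed.
Lemma cR_plus (f g : R -> R) x : continuous f x -> continuous g x -> continuous (fun y => f y + g y) x.
Proof. intros; exact (@continuous_plus R_UniformSpace R_AbsRing R_NormedModule f g x H H0). Qed.
Lemma cR_opp (f : R -> R) x : continuous f x -> continuous (fun y => - f y) x.
Proof. intros; exact (@continuous_opp R_UniformSpace R_AbsRing R_NormedModule f x H). Qed.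
Lemma cR_div (f g : R -> R) x : continuous f x -> continuous g x -> g x <> 0 -> continuous (fun y => f y / g y) x.
Proof. intros. unfold Rdiv. apply cR_mult; auto. apply continuous_Rinv_comp; auto. Qed.

Lemma RInt_ext_pos f t : 0 <= t -> RInt (ext f) 0 t = RInt f 0 t.
Proof. intros Ht. apply RInt_ext. intros x Hx. rewrite Rmin_left in Hx by lra.
  apply ext_pos; lra. Qed.

Theorem mainTheorem4
  (alpha : R) (beta : R -> R) (S0 I0 : R) (S I Rm : R -> R)
  (Halpha : 0 < alpha)
  (Hbeta_cont : continuous_on_nonneg beta)
  (Hbeta_pos : forall t, 0 <= t -> 0 < beta t)
  (HS0 : 0 < S0) (HI0 : 0 <= I0)
  (Hpos : forall t, 0 <= t -> 0 < S t + I t)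
  (HSode : solves_on_nonneg S (fun t => - (beta t * S t * I t / (S t + I t))))
  (HIode : solves_on_nonneg I (fun t => beta t * S t * I t / (S t + I t) - alpha * I t))
  (HRode : solves_on_nonneg Rm (fun t => alpha * I t))
  (HSinit : S 0 = S0) (HIinit : I 0 = I0) :
  let y := fun t => I0 / S0 * exp (RInt (fun s => beta s - alpha) 0 t) in
  forall t, 0 <= t ->
    I t / S t = y t /\
    S t = S0 * exp (- RInt (fun s => beta s * y s / (1 + y s)) 0 t) /\
    I t = S t * y t.
Proof.
  intros y.
  destruct HSode as [HSd HSc]. destruct HIode as [HId HIc].
  pose proof (L1 _ HSc) as cS. pose proof (L1 _ HIc) as cI.
  pose proof (L1 _ Hbeta_cont) as cB.
  assert (Hm : forall x, 0 <= Rmax x 0) by (intros; apply Rmax_r).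
  set (c1 := fun s => -(beta s * I s / (S s + I s))).
  assert (Hc1 : forall x, continuous (ext c1) x).
  { intros x. change (continuous (fun s => -(ext beta s * ext I s / (ext S s + ext I s))) x).
    apply cR_opp. apply cR_div. apply cR_mult; auto. apply cR_plus; auto.
    unfold ext. specialize (Hpos _ (Hm x)). lra. }
  assert (HS : forall t, 0 <= t -> S t = S0 * exp (RInt (ext c1) 0 t)).
  { intros t Ht. rewrite <- HSinit. apply core; auto.
    - intros u Hu. rewrite ext_pos by lra.
      replace (c1 u * S u) with (- (beta u * S u * I u / (S u + I u))).
      + apply HSd; auto.
      + unfold c1, Rdiv. ring.
    - apply HSc. }
  assert (Spos : forall t, 0 <= t -> 0 < S t).
  { intros t Ht. rewrite HS by auto. apply Rmult_lt_0_compat; auto. apply exp_pos. }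
  assert (Hy : forall t, 0 <= t -> I t / S t = y t).
  { intros t Ht.
    assert (E := core (ext (fun s => beta s - alpha)) (fun s => I s / S s)).
    cbv beta in E. rewrite E; auto.
    - rewrite HSinit, HIinit, RInt_ext_pos by auto. reflexivity.
    - intros x. change (continuous (fun s => ext beta s - alpha) x).
      unfold Rminus. apply cR_plus; auto. apply continuous_const.
    - intros u Hu. rewrite ext_pos by lra.
      assert (Su := Spos u ltac:(lra)). assert (Pu := Hpos u ltac:(lra)).
      eapply is_derive_ext; [intros; reflexivity|].
      replace ((beta u - alpha) * (I u / S u)) with
        (((beta u * S u * I u / (S u + I u) - alpha * I u) * S u
          - I u * (- (beta u * S u * I u / (S u + I u)))) / S u ^ 2).
      + apply is_derive_div; auto. lra.
      + field. lra.
    - refine (proj2 (L2 (fun s => ext I s / ext S s) (fun s => I s / S s) _ _)).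
      + intros x. apply cR_div; auto. unfold ext. specialize (Spos _ (Hm x)). lra.
      + intros s Hs. unfold ext. rewrite Rmax_left; auto. }
  assert (Hc3 : forall x, 0 < x -> ext c1 x = - (beta x * y x / (1 + y x))).
  { intros x Hx. rewrite ext_pos by lra. unfold c1.
    assert (Sx := Spos x ltac:(lra)). assert (Px := Hpos x ltac:(lra)).
    rewrite <- (Hy x) by lra.
    field. split; lra. }
  intros t Ht. split; [|split].
  - auto.
  - rewrite HS by auto. f_equal. f_equal.
    rewrite (RInt_ext _ (fun s => - (beta s * y s / (1 + y s)))).
    + refine (RInt_opp (V:=R_CompleteNormedModule) (fun s => beta s * y s / (1 + y s)) 0 t _).
      apply ex_RInt_ext with (f := fun s => - ext c1 s).
      * intros x Hx. rewrite Rmin_left in Hx by lra. rewrite Hc3 by lra. apply Ropp_involutive.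
      * apply (ex_RInt_continuous (V:=R_CompleteNormedModule)). intros. apply cR_opp; auto.
    + intros x Hx. rewrite Rmin_left in Hx by lra. apply Hc3. lra.
  - rewrite <- Hy by auto. field. specialize (Spos t Ht). lra.
Qed.
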